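(* With notation as in the context, fix any $j_0\in\Omega_2\setminus\{1\}$ and $t_0\in\Omega_1\setminus\{1\}$, and define elements $A_{i,k}\in\mathcal{U}(\mathcal{J}_{\mathbb{F}})$ for $i,k\in\Omega_1\cup\Omega_3$ by: $A_{i,k}=G_{i,1}G_{k,1}$ for $i,k\in\Omega_1$, $i\neq k$; $A_{1,p+1}=G_{1,j_0}G_{1,j_0}G_{1,1}$; $A_{i,k}=G_{i,1}G_{1,1}G_{1,k-p}$ for $i\in\Omega_1$, $k\in\Omega_3$, $(i,k)\neq(1,p+1)$; $A_{i,k}=-A_{k,i}+G_{k,i-p}$ for $i\in\Omega_3$, $k\in\Omega_1$; $A_{i,k}=G_{1,i-p}G_{1,k-p}$ for $i,k\in\Omega_3$, $i\neq k$; $A_{1,1}=G_{1,1}G_{1,1}G_{1,j_0}G_{1,j_0}$; $A_{i,i}=-G_{1,1}G_{1,1}G_{t_0,1}G_{t_0,1}+G_{i,1}G_{i,1}$ for $i\in\Omega_1\setminus\{1\}$; $A_{i,i}=-G_{1,1}G_{1,1}G_{1,j_0}G_{1,j_0}+G_{1,i-p}G_{1,i-p}$ for $i\in\Omega_3$. Then these elements do not depend on the choices of $j_0,t_0$, they satisfy $A_{i,k}A_{\ell,t}=\delta_{k,\ell}A_{i,t}$ for all $i,k,\ell,t\in\Omega_1\cup\Omega_3$, and $G_{i,j}=A_{i,j+p}+A_{j+p,i}$ for all $i\in\Omega_1$, $j\in\Omega_2$.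
   Context: Let $\mathbb{F}$ be a field of characteristic $0$ and $p,q>1$ integers with $p\neq q$. Let $\mathcal{J}_{\mathbb{F}}$ be the vector space $M_{p\times q}(\mathbb{F})$ of $p\times q$ matrices with the Jordan triple product $\{x,y,z\}=xy^tz+zy^tx$ ($y^t$ the transpose). Put $\Omega_1=\{1,\dots,p\}$, $\Omega_2=\{1,\dots,q\}$, $\Omega_3=\{p+1,\dots,p+q\}$, and let $E_{i,j}$ ($i\in\Omega_1$, $j\in\Omega_2$) be the standard matrix units of $M_{p\times q}(\mathbb{F})$. Let $\mathfrak{F}$ be the free associative algebra (without identity element) over $\mathbb{F}$ on symbols $G_{i,j}$ ($i\in\Omega_1$, $j\in\Omega_2$), and let $\Phi:\mathcal{J}_{\mathbb{F}}\to\mathfrak{F}$ be the linear map with $\Phi(E_{i,j})=G_{i,j}$. Let $I$ be the two-sided ideal of $\mathfrak{F}$ generated by all elements $G_{i,j}G_{k,\ell}G_{s,t}+G_{s,t}G_{k,\ell}G_{i,j}-\Phi(\{E_{i,j},E_{k,\ell},E_{s,t}\})$ ($i,k,s\in\Omega_1$; $j,\ell,t\in\Omega_2$). The universal associative envelope is $\mathcal{U}(\mathcal{J}_{\mathbb{F}})=\mathfrak{F}/I$; the image of $G_{i,j}$ in it is again denoted $G_{i,j}$. $\delta_{k,\ell}$ is the Kronecker delta. *)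

(* Defs.v *)
From HB Require Import structures.
From mathcomp Require Import all_boot all_order all_algebra.
Set Implicit Arguments. Unset Strict Implicit. Unset Printing Implicit Defensive.
Import GRing.Theory.
Local Open Scope ring_scope.

(* Index conventions (0-based):
   Omega_1 = {1..p}  <->  'I_p   (row r corresponds to r+1)
   Omega_2 = {1..q}  <->  'I_q   (column c corresponds to c+1)
   Omega_1 \cup Omega_3 = {1..p+q} <-> 'I_(p+q), via split:
      inl a  <-> a+1 in Omega_1,  inr b <-> p+1+b in Omega_3 (so "k-p" is column b). *)

(* Syntax of non-unital associative F-algebra expressions in the generators
   G_{i,j}.  The universal envelope F/I is these terms modulo the congruence
   [ueq] below (algebra axioms + the generating relations of I). *)
Inductive term (F : Type) (p q : nat) : Type :=
| Tgen of 'I_p & 'I_q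
| Tzero
| Tadd of term F p q & term F p q
| Topp of term F p q
| Tscale of F & term F p q
| Tmul of term F p q & term F p q.

Arguments Tzero {F p q}.

Section Envelope.
Variables (F : fieldType) (p q : nat).

Local Notation T := (term F p q).

Definition Phi (x : 'M[F]_(p, q)) : T :=
  \big[@Tadd F p q/Tzero]_(a < p) \big[@Tadd F p q/Tzero]_(b < q) Tscale (x a b) (Tgen F a b).

Definition jtp (x y z : 'M[F]_(p, q)) : 'M[F]_(p, q) :=
  x *m y^T *m z + z *m y^T *m x.

Definition E (i : 'I_p) (j : 'I_q) : 'M[F]_(p, q) := delta_mx i j.

(* ueq x y  <->  x and y have the same image in U(J_F) = Free/I. *)
Inductive ueq : T -> T -> Prop :=
| ueq_refl x : ueq x x
| ueq_sym x y : ueq x y -> ueq y x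
| ueq_trans x y z : ueq x y -> ueq y z -> ueq x z
| ueq_add x x' y y' : ueq x x' -> ueq y y' -> ueq (Tadd x y) (Tadd x' y')
| ueq_opp x x' : ueq x x' -> ueq (Topp x) (Topp x')
| ueq_scale c x x' : ueq x x' -> ueq (Tscale c x) (Tscale c x')
| ueq_mul x x' y y' : ueq x x' -> ueq y y' -> ueq (Tmul x y) (Tmul x' y')
| ueq_addA x y z : ueq (Tadd x (Tadd y z)) (Tadd (Tadd x y) z)
| ueq_addC x y : ueq (Tadd x y) (Tadd y x)
| ueq_add0 x : ueq (Tadd Tzero x) x
| ueq_addN x : ueq (Tadd x (Topp x)) Tzero
| ueq_scaleDr c x y : ueq (Tscale c (Tadd x y)) (Tadd (Tscale c x) (Tscale c y))
| ueq_scaleDl c d x : ueq (Tscale (c + d) x) (Tadd (Tscale c x) (Tscale d x))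
| ueq_scaleA c d x : ueq (Tscale c (Tscale d x)) (Tscale (c * d) x)
| ueq_scale1 x : ueq (Tscale 1 x) x
| ueq_mulA x y z : ueq (Tmul x (Tmul y z)) (Tmul (Tmul x y) z)
| ueq_mulDl x y z : ueq (Tmul (Tadd x y) z) (Tadd (Tmul x z) (Tmul y z))
| ueq_mulDr x y z : ueq (Tmul x (Tadd y z)) (Tadd (Tmul x y) (Tmul x z))
| ueq_mulZl c x y : ueq (Tmul (Tscale c x) y) (Tscale c (Tmul x y))
| ueq_mulZr c x y : ueq (Tmul x (Tscale c y)) (Tscale c (Tmul x y))
| ueq_rel i j k l s t :
    ueq (Tadd (Tmul (Tmul (Tgen F i j) (Tgen F k l)) (Tgen F s t))
              (Tmul (Tmul (Tgen F s t) (Tgen F k l)) (Tgen F i j)))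
        (Phi (jtp (E i j) (E k l) (E s t))).

Definition ofirst n (a : 'I_n) : 'I_n :=
  Ordinal (leq_ltn_trans (leq0n a) (ltn_ord a)).

Section Aelts.
Variables (j0 : 'I_q) (t0 : 'I_p).
Let r1 := ofirst t0.
Let c1 := ofirst j0.
Let g (a : 'I_p) (b : 'I_q) : T := Tgen F a b.
Local Infix "**" := Tmul (at level 40, left associativity).

(* A_{i,k} for i in Omega_1 (row a), k in Omega_3 (column b = k-p) *)
Definition A13 (a : 'I_p) (b : 'I_q) : T :=
  if (a == r1) && (b == c1) then g r1 j0 ** g r1 j0 ** g r1 c1
  else g a c1 ** g r1 c1 ** g r1 b.

Definition A (i k : 'I_(p + q)) : T :=
  match split i, split k with
  | inl a, inl b =>
      if a == b then
        (if a == r1 then g r1 c1 ** g r1 c1 ** g r1 j0 ** g r1 j0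
         else Tadd (Topp (g r1 c1 ** g r1 c1 ** g t0 c1 ** g t0 c1)) (g a c1 ** g a c1))
      else g a c1 ** g b c1
  | inl a, inr b => A13 a b
  | inr b, inl a => Tadd (Topp (A13 a b)) (g a b)
  | inr a, inr b =>
      if a == b then
        Tadd (Topp (g r1 c1 ** g r1 c1 ** g r1 j0 ** g r1 j0)) (g r1 a ** g r1 a)
      else g r1 a ** g r1 b
  end.
End Aelts.
End Envelope.

(* Main.v *)
Require Import Defs.
From HB Require Import structures.
From mathcomp Require Import all_boot all_order all_algebra.
From mathcomp Require Import boolp.
Set Implicit Arguments. Unset Strict Implicit. Unset Printing Implicit Defensive.
Import GRing.Theory.
Local Open Scope ring_scope.

Definition Qt (F : fieldType) (p q : nat) :=
  {P : term F p q -> Prop | exists x, P = ueq x}.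

HB.instance Definition _ (F : fieldType) p q := gen_eqMixin (Qt F p q).
HB.instance Definition _ (F : fieldType) p q := gen_choiceMixin (Qt F p q).

Section Quot.
Variables (F : fieldType) (p q : nat).
Local Notation T := (term F p q).
Local Notation Q := (Qt F p q).

Definition cls (x : T) : Q := exist _ (ueq x) (ex_intro _ x erefl).

Lemma cls_eq x y : cls x = cls y <-> ueq x y.
Proof.
split.
  move=> H0; have H : ueq x = ueq y by exact: (congr1 sval H0).
  have : ueq y y by exact: ueq_refl.
  by rewrite -H.
move=> H; apply: eq_exist; apply: funext => z; apply: propext; split => Hz.
  exact: ueq_trans (ueq_sym H) Hz.
exact: ueq_trans H Hz.
Qed.

Lemma clsS (a : Q) : exists x, a = cls x.
Proof.
case: a => P [x e]; exists x; rewrite /cls; subst P; exact: eq_exist.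
Qed.

Definition rep (a : Q) : T := sval (cid (clsS a)).
Lemma repK a : cls (rep a) = a.
Proof. by rewrite /rep; case: cid => x /= ->. Qed.
Lemma ueq_rep x : ueq x (rep (cls x)).
Proof. by apply/cls_eq; rewrite repK. Qed.

Definition addQ a b := cls (Tadd (rep a) (rep b)).
Definition oppQ a := cls (Topp (rep a)).
Definition zeroQ := cls Tzero.
Definition scaleQ (c : F) a := cls (Tscale c (rep a)).
Definition mulQ a b := cls (Tmul (rep a) (rep b)).

Lemma cls_add x y : cls (Tadd x y) = addQ (cls x) (cls y).
Proof. by apply/cls_eq; apply: ueq_add; apply: ueq_rep. Qed.
Lemma cls_opp x : cls (Topp x) = oppQ (cls x).
Proof. by apply/cls_eq; apply: ueq_opp; apply: ueq_rep. Qed.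
Lemma cls_scale c x : cls (Tscale c x) = scaleQ c (cls x).
Proof. by apply/cls_eq; apply: ueq_scale; apply: ueq_rep. Qed.
Lemma cls_mul x y : cls (Tmul x y) = mulQ (cls x) (cls y).
Proof. by apply/cls_eq; apply: ueq_mul; apply: ueq_rep. Qed.

Ltac qelim := repeat match goal with a : Q |- _ => have [? ->] := clsS a; clear a end.

Lemma addQA : associative addQ.
Proof. move=> a b c; qelim; rewrite -!cls_add; apply/cls_eq; exact: ueq_addA. Qed.
Lemma addQC : commutative addQ.
Proof. move=> a b; qelim; rewrite -!cls_add; apply/cls_eq; exact: ueq_addC. Qed.
Lemma add0Q : left_id zeroQ addQ.
Proof. move=> a; qelim; rewrite -!cls_add; apply/cls_eq; exact: ueq_add0. Qed.
Lemma addNQ : left_inverse zeroQ oppQ addQ.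
Proof. move=> a; qelim; rewrite -cls_opp -!cls_add; apply/cls_eq.
  exact: ueq_trans (ueq_addC _ _) (ueq_addN _). Qed.

HB.instance Definition _ := GRing.isZmodule.Build Q addQA addQC add0Q addNQ.

Lemma clsD x y : cls (Tadd x y) = cls x + cls y. Proof. exact: cls_add. Qed.
Lemma clsN x : cls (Topp x) = - cls x. Proof. exact: cls_opp. Qed.
Lemma cls0 : cls Tzero = 0. Proof. by []. Qed.

Lemma scaleQA c d a : scaleQ c (scaleQ d a) = scaleQ (c * d) a.
Proof. qelim; rewrite -!cls_scale; apply/cls_eq; exact: ueq_scaleA. Qed.
Lemma scale1Q : left_id 1 scaleQ.
Proof. move=> a; qelim; rewrite -!cls_scale; apply/cls_eq; exact: ueq_scale1. Qed.
Lemma scaleQDr : right_distributive scaleQ +%R.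
Proof. move=> c a b; qelim; rewrite -[in LHS]clsD -!cls_scale -clsD; apply/cls_eq; exact: ueq_scaleDr. Qed.
Lemma scaleQDl a : {morph scaleQ^~ a: c d / c + d}.
Proof. move=> c d; qelim; rewrite -!cls_scale -clsD; apply/cls_eq; exact: ueq_scaleDl. Qed.

HB.instance Definition _ := GRing.Zmodule_isLmodule.Build F Q scaleQA scale1Q scaleQDr scaleQDl.


Lemma cls_scaleE c x : cls (Tscale c x) = c *: cls x. Proof. exact: cls_scale. Qed.

Local Infix "**" := mulQ (at level 40, left associativity).

Lemma mulQA a b c : a ** (b ** c) = a ** b ** c.
Proof. qelim; rewrite -!cls_mul; apply/cls_eq; exact: ueq_mulA. Qed.
Lemma mulQDl a b c : (a + b) ** c = a ** c + b ** c.
Proof. have [x ->] := clsS a; have [y ->] := clsS b; have [z ->] := clsS c.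
 rewrite -(clsD x y) -!cls_mul -clsD; apply/cls_eq; exact: ueq_mulDl. Qed.
Lemma mulQDr a b c : a ** (b + c) = a ** b + a ** c.
Proof. have [x ->] := clsS a; have [y ->] := clsS b; have [z ->] := clsS c.
 rewrite -(clsD y z) -!cls_mul -clsD; apply/cls_eq; exact: ueq_mulDr. Qed.
Lemma mulQZl k a b : (k *: a) ** b = k *: (a ** b).
Proof. have [x ->] := clsS a; have [y ->] := clsS b.
 rewrite -(cls_scaleE k x) -!cls_mul -cls_scaleE; apply/cls_eq; exact: ueq_mulZl. Qed.
Lemma mulQZr k a b : a ** (k *: b) = k *: (a ** b).
Proof. have [x ->] := clsS a; have [y ->] := clsS b.
 rewrite -(cls_scaleE k y) -!cls_mul -cls_scaleE; apply/cls_eq; exact: ueq_mulZr. Qed.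

Lemma mul0Q a : 0 ** a = 0.
Proof. by apply: (addrI (0 ** a)); rewrite -mulQDl !addr0. Qed.
Lemma mulQ0 a : a ** 0 = 0.
Proof. by apply: (addrI (a ** 0)); rewrite -mulQDr !addr0. Qed.
Lemma mulNQ a b : (- a) ** b = - (a ** b).
Proof. by apply: (addrI (a ** b)); rewrite -mulQDl !subrr mul0Q. Qed.
Lemma mulQN a b : a ** (- b) = - (a ** b).
Proof. by apply: (addrI (a ** b)); rewrite -mulQDr !subrr mulQ0. Qed.
Lemma mulBQ a b c : (a - b) ** c = a ** c - b ** c.
Proof. by rewrite mulQDl mulNQ. Qed.
Lemma mulQB a b c : c ** (a - b) = c ** a - c ** b.
Proof. by rewrite mulQDr mulQN. Qed.
Lemma mulnQ a b n : (a *+ n) ** b = (a ** b) *+ n.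
Proof. by elim: n => [|n IH]; rewrite ?mul0Q // !mulrS mulQDl IH. Qed.
Lemma mulQn a b n : b ** (a *+ n) = (b ** a) *+ n.
Proof. by elim: n => [|n IH]; rewrite ?mulQ0 // !mulrS mulQDr IH. Qed.
Lemma mulQ_suml I (r : seq I) (P : pred I) (f : I -> Q) b :
  (\sum_(i <- r | P i) f i) ** b = \sum_(i <- r | P i) (f i ** b).
Proof. by apply: (big_morph (mulQ^~ b)) => [x y|]; rewrite ?mul0Q ?mulQDl. Qed.
Lemma mulQ_sumr I (r : seq I) (P : pred I) (f : I -> Q) b :
  b ** (\sum_(i <- r | P i) f i) = \sum_(i <- r | P i) (b ** f i).
Proof. by apply: (big_morph (mulQ b)) => [x y|]; rewrite ?mulQ0 ?mulQDr. Qed.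

Definition xg (a : 'I_p) (c : 'I_q) : Q := cls (Tgen F a c).

Lemma cls_big I (r : seq I) (P : pred I) (f : I -> T) :
  cls (\big[@Tadd F p q/Tzero]_(i <- r | P i) f i) = \sum_(i <- r | P i) cls (f i).
Proof. by apply: (big_morph cls) => [x y|]; rewrite ?clsD. Qed.

Lemma clsPhi M : cls (Phi M) = \sum_a \sum_b M a b *: xg a b.
Proof. rewrite /Phi cls_big; apply: eq_bigr => a _; rewrite cls_big; apply: eq_bigr => b _.
  by rewrite cls_scaleE. Qed.

Lemma sum_delta (i : 'I_p) (j : 'I_q) (f : 'I_p -> 'I_q -> Q) :
  \sum_a \sum_b (delta_mx i j : 'M[F]_(p, q)) a b *: f a b = f i j.
Proof.
rewrite (bigD1 i) //= [X in _ + X]big1 => [|a /negPf ai]; last first.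
  by apply: big1 => b _; rewrite mxE ai /= scale0r.
rewrite addr0 (bigD1 j) //= [X in _ + X]big1 => [|b /negPf bj]; last first.
  by rewrite mxE bj andbF scale0r.
by rewrite addr0 mxE !eqxx scale1r.
Qed.

Lemma jtpE (i k s : 'I_p) (j l t : 'I_q) : jtp (E F i j) (E F k l) (E F s t) =
   delta_mx i t *+ ((j == l) && (k == s)) + delta_mx s j *+ ((t == l) && (k == i)).
Proof.
have mxnl m n r (X : 'M[F]_(m, n)) (Y : 'M[F]_(n, r)) b : (X *+ b) *m Y = (X *m Y) *+ b.
  by elim: b => [|b IH]; rewrite ?mul0mx // !mulrS mulmxDl IH.
rewrite /jtp /E !trmx_delta !mul_delta_mx_cond !mxnl !mul_delta_mx_cond -!mulrnA.
by congr (_ + _); congr (_ *+ _); rewrite mulnb andbC.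
Qed.

Lemma relQ (i k s : 'I_p) (j l t : 'I_q) :
  xg i j ** xg k l ** xg s t + xg s t ** xg k l ** xg i j =
  xg i t *+ ((j == l) && (k == s)) + xg s j *+ ((t == l) && (k == i)).
Proof.
rewrite /xg -!cls_mul -clsD.
have /cls_eq -> := ueq_rel F i j k l s t.
rewrite clsPhi jtpE.
under eq_bigr do under eq_bigr do rewrite mxE scalerDl !mulmxnE -!scalerMnl.
under eq_bigr do rewrite big_split /=.
rewrite big_split /=.
under eq_bigr do rewrite sumrMnl.
under [X in _ + X]eq_bigr do rewrite sumrMnl.
by rewrite !sumrMnl !sum_delta.
Qed.

End Quot.

Local Infix "**" := mulQ (at level 40, left associativity).

Fixpoint mm (F : fieldType) (p q : nat) (t : term F p q) : 'M[F]_(p + q) :=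
  match t with
  | Tgen a c => delta_mx (lshift q a) (rshift p c) + delta_mx (rshift p c) (lshift q a)
  | Tzero => 0
  | Tadd u v => mm u + mm v
  | Topp u => - mm u
  | Tscale k u => k *: mm u
  | Tmul u v => mm u *m mm v
  end.

Lemma splitL p q (a : 'I_p) : split (lshift q a) = inl a.
Proof. exact: (unsplitK (inl a)). Qed.
Lemma splitR p q (c : 'I_q) : split (rshift p c) = inr c.
Proof. exact: (unsplitK (inr c)). Qed.

Lemma ordLR p q (i : 'I_(p + q)) : {a | i = lshift q a} + {c | i = rshift p c}.
Proof.
case E: (split i) => [a|c]; [left; exists a | right; exists c];
  by rewrite -(splitK i) E.
Qed.


Section Model.
Variables (F : fieldType) (p q : nat).
Local Notation M := ('M[F]_(p + q)).

Lemma mulmxnl m n r (X : 'M[F]_(m, n)) (Y : 'M[F]_(n, r)) k : (X *+ k) *m Y = (X *m Y) *+ k.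
Proof. by elim: k => [|k IH]; rewrite ?mul0mx // !mulrS mulmxDl IH. Qed.
Lemma mulmxnr m n r (X : 'M[F]_(m, n)) (Y : 'M[F]_(n, r)) k : X *m (Y *+ k) = (X *m Y) *+ k.
Proof. by elim: k => [|k IH]; rewrite ?mulmx0 // !mulrS mulmxDr IH. Qed.

Ltac ms := rewrite /= ?(mulmxDl, mulmxDr, mulmxnl, mulmxnr, mul_delta_mx_cond, eq_shift,
   mulNmx, mulmxN, eqxx, mulr0n, mulr1n, addr0, add0r, oppr0).

Lemma ofirstE n (u v : 'I_n) : ofirst u = ofirst v.
Proof. exact: val_inj. Qed.

Lemma mmA (j1 : 'I_q) (t1 : 'I_p) : val j1 != 0%N -> val t1 != 0%N ->
  forall i k, mm (A F j1 t1 i k) = delta_mx i k.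
Proof.
move=> hj ht i k.
have hj1 : (j1 == ofirst j1) = false.
  by apply/negbTE; apply: contra hj => /eqP ->.
have ht1 : (t1 == ofirst t1) = false.
  by apply/negbTE; apply: contra ht => /eqP ->.
have hj1' : (ofirst j1 == j1) = false by rewrite eq_sym.
have ht1' : (ofirst t1 == t1) = false by rewrite eq_sym.
rewrite /A /A13.
set r1 := ofirst t1 in ht1 ht1' *; set c1 := ofirst j1 in hj1 hj1' *.
case: (ordLR i) => [[a ->]|[c ->]]; case: (ordLR k) => [[e ->]|[f ->]];
  rewrite ?splitL ?splitR.
- case: (eqVneq a e) => [<-|hae].
    case: (eqVneq a r1) => [->|har].
      by ms; rewrite hj1'; ms.
    have h1 := negPf har; have h2 : (r1 == a) = false by rewrite eq_sym h1.
    by ms; rewrite ?hj1 ?hj1' ?ht1 ?ht1' ?h1 ?h2; ms; rewrite [X in _ + X]addrC addKr.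
  have h1 := negPf hae; have h2 : (e == a) = false by rewrite eq_sym h1.
  by ms; rewrite ?h1 ?h2; ms.
- have hf : (a == r1) && (f == c1) = (a == r1) && (f == c1) by [].
  case: (eqVneq a r1) => [->|har]; case: (eqVneq f c1) => [->|hfc] /=.
  + by ms; rewrite ?hj1 ?hj1'; ms.
  + have h1 := negPf hfc; have h2 : (c1 == f) = false by rewrite eq_sym h1.
    by ms; rewrite ?h1 ?h2; ms.
  + have h1 := negPf har; have h2 : (r1 == a) = false by rewrite eq_sym h1.
    by ms; rewrite ?h1 ?h2; ms.
  + have h1 := negPf har; have h2 : (r1 == a) = false by rewrite eq_sym h1.
    have h3 := negPf hfc; have h4 : (c1 == f) = false by rewrite eq_sym h3.
    by ms; rewrite ?h1 ?h2 ?h3 ?h4; ms.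
- case: (eqVneq e r1) => [->|har]; case: (eqVneq c c1) => [->|hfc] /=.
  + by ms; rewrite ?hj1 ?hj1'; ms; rewrite addKr.
  + have h1 := negPf hfc; have h2 : (c1 == c) = false by rewrite eq_sym h1.
    by ms; rewrite ?h1 ?h2; ms; rewrite addKr.
  + have h1 := negPf har; have h2 : (r1 == e) = false by rewrite eq_sym h1.
    by ms; rewrite ?h1 ?h2; ms; rewrite addKr.
  + have h1 := negPf har; have h2 : (r1 == e) = false by rewrite eq_sym h1.
    have h3 := negPf hfc; have h4 : (c1 == c) = false by rewrite eq_sym h3.
    by ms; rewrite ?h1 ?h2 ?h3 ?h4; ms; rewrite addKr.
- case: (eqVneq c f) => [<-|hcf] /=.
    by ms; rewrite ?hj1 ?hj1'; ms; rewrite addKr.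
  have h1 := negPf hcf; have h2 : (f == c) = false by rewrite eq_sym h1.
  by ms; rewrite ?h1 ?h2; ms.
Qed.
Lemma mmDec (a r0 : 'I_p) (c c0 : 'I_q) : c != c0 ->
  mm (Tadd (Tmul (Tmul (Tgen F a c0) (Tgen F r0 c0)) (Tgen F r0 c))
           (Tmul (Tmul (Tgen F r0 c) (Tgen F r0 c0)) (Tgen F a c0))) = mm (Tgen F a c).
Proof.
move=> hc; have h1 := negPf hc; have h2 : (c0 == c) = false by rewrite eq_sym h1.
case: (eqVneq a r0) => [->|ha].
  by ms; rewrite ?h1 ?h2; ms.
have h3 := negPf ha; have h4 : (r0 == a) = false by rewrite eq_sym h3.
by ms; rewrite ?h1 ?h2 ?h3 ?h4; ms.
Qed.
End Model.

Section Alg.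
Variables (F : fieldType) (p q : nat).
Hypothesis two : (2%:R : F) != 0.
Local Notation Q := (Qt F p q).
Local Notation x := (@xg F p q).

Definition rel (i : 'I_p) (j : 'I_q) (k : 'I_p) (l : 'I_q) (s : 'I_p) (t : 'I_q) :=
  @relQ F p q i k s j l t.

Lemma mulrn2K (u v : Q) : u *+ 2 = v *+ 2 -> u = v.
Proof.
move=> h; have : (2%:R : F)^-1 *: (u *+ 2) = (2%:R : F)^-1 *: (v *+ 2) by rewrite h.
by rewrite -!scaler_nat !scalerA mulVf // !scale1r.
Qed.

Lemma sand i j k l : x i j ** x k l ** x i j = x i j *+ ((i == k) && (j == l)).
Proof.
apply: mulrn2K; rewrite mulr2n rel.
by rewrite [(k == i)]eq_sym mulr2n andbC.
Qed.

Lemma cube i j : x i j ** x i j ** x i j = x i j.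
Proof. by rewrite sand !eqxx. Qed.

Lemma zero_b i j k l : i != k -> j != l -> x i j ** x k l = 0.
Proof.
move=> /negPf ik /negPf jl.
have h := rel i j i j k l; rewrite eqxx ik /= [l == j]eq_sym jl /= !mulr0n addr0 in h.
have h2 : x i j ** x i j ** x k l = - (x k l ** x i j ** x i j).
  by apply/eqP; rewrite -addr_eq0 h.
rewrite -{1}cube.
have -> : x i j ** x i j ** x i j ** x k l = x i j ** (x i j ** x i j ** x k l) by rewrite !mulQA.
by rewrite h2 mulQN !mulQA sand ik /= mulr0n mul0Q oppr0.
Qed.


Ltac nq := rewrite ?(mulQDl, mulQDr, mulQN, mulNQ, mulQ0, mul0Q, mulQA, mulnQ, mulQn,
   addr0, add0r, oppr0, mul0rn, mulr0n, mulr1n).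

Variables (r0 b : 'I_p) (c0 d : 'I_q).
Hypotheses (hb : b != r0) (hd : d != c0).
Local Notation w := (x r0 c0).
Local Notation y a := (x a c0).
Local Notation z c := (x r0 c).

Lemma L1 a c : a != r0 -> c != c0 -> y a ** z c = 0.
Proof. by move=> ha hc; apply: zero_b => //; rewrite eq_sym. Qed.
Lemma L1u u a c : a != r0 -> c != c0 -> u ** y a ** z c = 0.
Proof. by move=> ha hc; rewrite -mulQA L1 // mulQ0. Qed.
Lemma L2 a c : a != r0 -> c != c0 -> z c ** y a = 0.
Proof. by move=> ha hc; apply: zero_b => //; rewrite eq_sym. Qed.
Lemma L2u u a c : a != r0 -> c != c0 -> u ** z c ** y a = 0.
Proof. by move=> ha hc; rewrite -mulQA L2 // mulQ0. Qed.

Lemma cubeu u i j : u ** x i j ** x i j ** x i j = u ** x i j.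
Proof. by rewrite -!mulQA (mulQA (x i j)) cube. Qed.

Lemma sandwy a : a != r0 -> w ** y a ** w = 0.
Proof. by move=> /negPf ha; rewrite sand eq_sym ha. Qed.
Lemma sandwz c : c != c0 -> w ** z c ** w = 0.
Proof. by move=> /negPf hc; rewrite sand eqxx eq_sym hc. Qed.

Lemma Sw : y b ** y b ** w + w ** y b ** y b = w.
Proof. by rewrite rel (negPf hb) !eqxx /= mulr0n add0r. Qed.

Lemma Qz c : c != d -> z d ** z d ** z c + z c ** z d ** z d = z c.
Proof. by move=> /negPf hc; rewrite rel hc !eqxx /= mulr0n addr0. Qed.

Lemma Qw : z d ** z d ** w + w ** z d ** z d = w.
Proof. by apply: Qz; rewrite eq_sym. Qed.

Ltac solv h := apply/eqP; rewrite eq_sym subr_eq; first [by rewrite h | by rewrite addrC h].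

Lemma Qw1 : w ** z d ** z d = w - z d ** z d ** w.
Proof. solv Qw. Qed.
Lemma Qw2 : z d ** z d ** w = w - w ** z d ** z d.
Proof. solv Qw. Qed.
Lemma Qw1u u : u ** w ** z d ** z d = u ** w - u ** z d ** z d ** w.
Proof. by rewrite -!mulQA (mulQA w) Qw1 mulQB !mulQA. Qed.
Lemma Qw2u u : u ** z d ** z d ** w = u ** w - u ** w ** z d ** z d.
Proof. by rewrite -!mulQA (mulQA (z d)) Qw2 mulQB !mulQA. Qed.

Lemma Pz c : c != c0 -> w ** w ** z c + z c ** w ** w = z c.
Proof. by move=> /negPf hc; rewrite rel hc !eqxx /= mulr0n addr0. Qed.
Lemma Pz1 c : c != c0 -> w ** w ** z c = z c - z c ** w ** w.
Proof. move=> hc; solv (Pz hc). Qed.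
Lemma Pz1u u c : c != c0 -> u ** w ** w ** z c = u ** z c - u ** z c ** w ** w.
Proof. by move=> hc; rewrite -!mulQA (mulQA w) Pz1 // mulQB !mulQA. Qed.

Lemma Py a : a != r0 -> w ** w ** y a + y a ** w ** w = y a.
Proof. by move=> /negPf ha; rewrite rel eq_sym ha !eqxx /= mulr0n add0r. Qed.
Lemma Py1 a : a != r0 -> w ** w ** y a = y a - y a ** w ** w.
Proof. move=> ha; solv (Py ha). Qed.
Lemma Py1u u a : a != r0 -> u ** w ** w ** y a = u ** y a - u ** y a ** w ** w.
Proof. by move=> ha; rewrite -!mulQA (mulQA w) Py1 // mulQB !mulQA. Qed.
Lemma Py2 a : a != r0 -> y a ** w ** w = y a - w ** w ** y a.
Proof. move=> ha; solv (Py ha). Qed.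

Lemma K1 c : c != c0 -> z c ** w ** z d ** z d = 0.
Proof.
move=> hc; rewrite -{1}Sw; nq.
by rewrite (L2 hb hc) (L1u _ hb hd); nq.
Qed.
Lemma K1u u c : c != c0 -> u ** z c ** w ** z d ** z d = 0.
Proof. move=> hc; rewrite [LHS](_ : _ = u ** (z c ** w ** z d ** z d)); first by rewrite K1 // mulQ0.
by rewrite !mulQA. Qed.

Lemma K2 c : c != c0 -> z d ** z d ** w ** z c = 0.
Proof.
move=> hc; rewrite -{1}Sw; nq.
by rewrite (L2u _ hb hd) (L1u _ hb hc); nq.
Qed.
Lemma K2u u c : c != c0 -> u ** z d ** z d ** w ** z c = 0.
Proof. move=> hc; rewrite [LHS](_ : _ = u ** (z d ** z d ** w ** z c)); first by rewrite K2 // mulQ0.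
by rewrite !mulQA. Qed.


Lemma Qz1 c : c != d -> z d ** z d ** z c = z c - z c ** z d ** z d.
Proof. move=> hc; solv (Qz hc). Qed.
Lemma Qz2u u c : c != d -> u ** z c ** z d ** z d = u ** z c - u ** z d ** z d ** z c.
Proof. move=> hc; rewrite [LHS](_ : _ = u ** (z c ** z d ** z d)); last by rewrite !mulQA.
  have -> : z c ** z d ** z d = z c - z d ** z d ** z c by solv (Qz hc).
  by rewrite mulQB !mulQA.
Qed.

Lemma G2 c : c != c0 -> w ** z c ** z d ** z d ** w ** w = 0.
Proof.
move=> hc; case: (eqVneq c d) => [->|hcd].
  by rewrite cubeu sandwz // !mul0Q.
rewrite Qz2u //; nq; rewrite sandwz // Qw1; nq.
by rewrite K2 // sandwz //; nq.
Qed.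

Lemma QdP : z d ** z d ** w ** w = w ** w - w ** z d ** z d ** w.
Proof. by rewrite Qw2; nq. Qed.
Lemma QdPu u : u ** z d ** z d ** w ** w = u ** w ** w - u ** w ** z d ** z d ** w.
Proof. rewrite [LHS](_ : _ = u ** (z d ** z d ** w ** w)); last by rewrite !mulQA.
  by rewrite QdP mulQB !mulQA. Qed.

Lemma G3 : w ** w ** z d ** z d ** w ** w = z d ** z d ** w ** w.
Proof. by rewrite (Qw1u w) QdP; nq; rewrite cube cubeu. Qed.
Lemma G3u u : u ** w ** w ** z d ** z d ** w ** w = u ** z d ** z d ** w ** w.
Proof. rewrite [LHS](_ : _ = u ** (w ** w ** z d ** z d ** w ** w)); last by rewrite !mulQA.
  by rewrite G3 !mulQA. Qed.

Lemma Eidem : z d ** z d ** w ** w ** z d ** z d ** w ** w = z d ** z d ** w ** w.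
Proof. by rewrite G3u cube. Qed.
Lemma EidemU u : u ** z d ** z d ** w ** w ** z d ** z d ** w ** w = u ** z d ** z d ** w ** w.
Proof. rewrite [LHS](_ : _ = u ** (z d ** z d ** w ** w ** z d ** z d ** w ** w));
  last by rewrite !mulQA. by rewrite Eidem !mulQA. Qed.

Lemma A1 e a : y e ** y a ** w ** z d ** z d ** w ** w = (w ** z d ** z d ** w ** w) *+ (e == a).
Proof.
case: (eqVneq e r0) => [->|he].
  case: (eqVneq a r0) => [->|ha]; first by rewrite cube mulr1n.
  by rewrite sandwy //; nq.
have h : y e ** y a ** w = y e *+ (a == r0) + w *+ (a == e) - w ** y a ** y e.
  by apply/eqP; rewrite eq_sym subr_eq rel !eqxx.
rewrite h; nq; rewrite (L1 he hd) (L1u _ he hd); nq.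
by rewrite eq_sym.
Qed.

Lemma A2 e c : y e ** z c ** z d ** z d ** w ** w = (y e ** w ** z d ** z d ** w ** w) *+ (c == c0).
Proof.
case: (eqVneq c c0) => [->|hc]; first by rewrite mulr1n.
case: (eqVneq e r0) => [->|he]; first by rewrite (G2 hc); nq.
by rewrite (L1 he hc); nq.
Qed.

Lemma A3 f a : z f ** y a ** w ** z d ** z d ** w ** w = (z f ** z d ** z d ** w ** w) *+ (a == r0).
Proof.
case: (eqVneq a r0) => [->|ha]; first by rewrite G3u mulr1n.
case: (eqVneq f c0) => [->|hf]; first by rewrite (sandwy ha); nq.
by rewrite (L2 ha hf); nq.
Qed.

Lemma A4 f c : z f ** z c ** z d ** z d ** w ** w = (w ** w ** z d ** z d ** w ** w) *+ (c == f).
Proof.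
case: (eqVneq c c0) => [->|hc].
  case: (eqVneq f c0) => [->|hf]; first by rewrite mulr1n.
  by rewrite (K1 hf); nq.
case: (eqVneq f c0) => [->|hf]; first by rewrite (G2 hc) (negPf hc); nq.
rewrite -(G3u (z f ** z c)).
have h : z f ** z c ** w = w *+ (f == c) - w ** z c ** z f.
  by apply/eqP; rewrite eq_sym subr_eq rel !eqxx !andbT [c0 == c]eq_sym (negPf hc) addr0.
by rewrite h; nq; rewrite (K1u _ hf); nq; rewrite eq_sym.
Qed.

Lemma P2y a : y a = y a ** w ** z d ** z d ** w ** w ** z d ** z d ** w ** w ** w
   + w ** z d ** z d ** w ** w ** z d ** z d ** w ** w ** w ** y a.
Proof.
rewrite !EidemU !cubeu.
case: (eqVneq a r0) => [->|ha].
  by rewrite (Qw1u w); nq; rewrite cube subrK.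
rewrite (Qw2u (y a ** w)) (Py2 ha); nq.
rewrite (L1 ha hd) (L1u _ ha hd); nq.
rewrite Qw1; nq; rewrite (Py1u _ ha) (L2u _ ha hd); nq.
by rewrite subrK.
Qed.

Lemma M1 c : c != c0 -> z c ** z d ** z d ** w ** w = z c ** w ** w.
Proof. by move=> hc; rewrite QdPu (K1 hc); nq. Qed.

Lemma M2 c : c != c0 -> c != d -> z c ** z d ** z d = z c ** w ** w.
Proof.
move=> hc hcd; rewrite -{2}(Pz hd); nq; rewrite (M1 hc).
have h1 : z c ** z d ** w = - (w ** z d ** z c).
  by apply/eqP; rewrite -addr_eq0 rel (negPf hcd) [c0 == d]eq_sym (negPf hd) /= !mulr0n addr0.
have h2 : w ** z d ** z c ** w ** z d = - (w ** z d ** z d ** w ** z c).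
  rewrite [LHS](_ : _ = w ** z d ** (z c ** w ** z d)); last by rewrite !mulQA.
  have -> : z c ** w ** z d = - (z d ** w ** z c).
    by apply/eqP; rewrite -addr_eq0 rel (negPf hc) (negPf hd) /= !mulr0n addr0.
  by rewrite mulQN !mulQA.
by rewrite h1; nq; rewrite h2 (K2u _ hc); nq.
Qed.

Lemma P2z c : c != c0 -> z c = w ** w ** z d ** z d ** w ** w ** z d ** z d ** w ** w ** z c
   + z c ** z d ** z d ** w ** w ** z d ** z d ** w ** w ** w ** w.
Proof.
move=> hc; rewrite !EidemU G3 cubeu.
case: (eqVneq c d) => [->|hcd].
  by rewrite (Pz1u _ hd) cube subrK.
rewrite (Pz1u _ hc) (Qz1 hcd); nq.
by rewrite (M1 hc) (M2 hc hcd) subrr subr0 subrK.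
Qed.

Lemma Dec a c : c != c0 -> x a c = y a ** w ** z c + z c ** w ** y a.
Proof. by move=> /negPf hc; rewrite rel !eqxx hc /= addr0. Qed.


Local Notation E := (z d ** z d ** w ** w).
Definition Rv (i : 'I_(p + q)) : Q :=
  match split i with inl a => y a ** w ** E | inr c => z c ** E end.
Definition Cv (i : 'I_(p + q)) : Q :=
  match split i with inl a => E ** w ** y a | inr c => E ** z c end.

Definition Act (t : term F p q) := forall l, cls t ** Rv l = \sum_m mm t m l *: Rv m.
Definition Rep (t : term F p q) := cls t = \sum_r \sum_m mm t r m *: (Rv r ** Cv m).

Lemma Act_zero : Act Tzero.
Proof. move=> l; rewrite cls0 mul0Q /= big1 // => m _; by rewrite mxE scale0r. Qed.
Lemma Act_add t1 t2 : Act t1 -> Act t2 -> Act (Tadd t1 t2).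
Proof.
move=> h1 h2 l; rewrite clsD mulQDl h1 h2 -big_split /=.
by apply: eq_bigr => m _; rewrite mxE scalerDl.
Qed.
Lemma Act_opp t : Act t -> Act (Topp t).
Proof.
move=> h l; rewrite clsN mulNQ h -sumrN /=.
by apply: eq_bigr => m _; rewrite mxE scaleNr.
Qed.
Lemma Act_scale k t : Act t -> Act (Tscale k t).
Proof.
move=> h l; rewrite cls_scaleE mulQZl h scaler_sumr /=.
by apply: eq_bigr => m _; rewrite mxE scalerA.
Qed.
Lemma Act_mul t1 t2 : Act t1 -> Act t2 -> Act (Tmul t1 t2).
Proof.
move=> h1 h2 l; rewrite cls_mul -mulQA h2 mulQ_sumr /=.
under eq_bigr do rewrite mulQZr h1 scaler_sumr.
rewrite exchange_big /=; apply: eq_bigr => r _.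
by rewrite mxE scaler_suml; apply: eq_bigr => m _; rewrite scalerA mulrC.
Qed.

Lemma Rep_zero : Rep Tzero.
Proof. rewrite /Rep cls0 /= big1 // => r _; rewrite big1 // => m _; by rewrite mxE scale0r. Qed.
Lemma Rep_add t1 t2 : Rep t1 -> Rep t2 -> Rep (Tadd t1 t2).
Proof.
move=> h1 h2; rewrite /Rep clsD h1 h2 -big_split /=; apply: eq_bigr => r _.
by rewrite -big_split; apply: eq_bigr => m _; rewrite mxE scalerDl.
Qed.
Lemma Rep_opp t : Rep t -> Rep (Topp t).
Proof.
move=> h; rewrite /Rep clsN h -sumrN /=; apply: eq_bigr => r _.
by rewrite -sumrN; apply: eq_bigr => m _; rewrite mxE scaleNr.
Qed.
Lemma Rep_scale k t : Rep t -> Rep (Tscale k t).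
Proof.
move=> h; rewrite /Rep cls_scaleE h scaler_sumr /=; apply: eq_bigr => r _.
by rewrite scaler_sumr; apply: eq_bigr => m _; rewrite mxE scalerA.
Qed.
Lemma Rep_mul t1 t2 : Act t1 -> Rep t2 -> Rep (Tmul t1 t2).
Proof.
move=> h1 h2; rewrite /Rep cls_mul h2 mulQ_sumr /=.
under eq_bigr do rewrite mulQ_sumr.
under eq_bigr do under eq_bigr do rewrite mulQZr mulQA h1 mulQ_suml scaler_sumr.
under eq_bigr do rewrite exchange_big /=.
apply: eq_trans (exchange_big _ _ _ _ _ _) _.
under eq_bigr do rewrite exchange_big /=.
apply: eq_bigr => s _; apply: eq_bigr => m _.
rewrite mxE scaler_suml; apply: eq_bigr => r _.
by rewrite mulQZl scalerA mulrC.
Qed.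


Lemma sum_col (i j l : 'I_(p + q)) (f : 'I_(p + q) -> Q) :
  \sum_m (delta_mx i j + delta_mx j i : 'M[F]_(p + q)) m l *: f m = f i *+ (l == j) + f j *+ (l == i).
Proof.
have g (u v : 'I_(p + q)) : \sum_m (delta_mx u v : 'M[F]_(p + q)) m l *: f m = f u *+ (l == v).
  rewrite (bigD1 u) //= [X in _ + X]big1 => [|m /negPf mu]; last by rewrite mxE mu scale0r.
  by rewrite addr0 mxE eqxx /= -scaler_nat.
by rewrite -!g -big_split; apply: eq_bigr => m _; rewrite mxE scalerDl.
Qed.

Lemma sum_sq (i j : 'I_(p + q)) (f : 'I_(p + q) -> 'I_(p + q) -> Q) :
  \sum_r \sum_m (delta_mx i j : 'M[F]_(p + q)) r m *: f r m = f i j.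
Proof.
rewrite (bigD1 i) //= [X in _ + X]big1 => [|a /negPf ai]; last first.
  by apply: big1 => m _; rewrite mxE ai /= scale0r.
rewrite addr0 (bigD1 j) //= [X in _ + X]big1 => [|m /negPf bj]; last first.
  by rewrite mxE bj andbF scale0r.
by rewrite addr0 mxE !eqxx scale1r.
Qed.

Lemma sum_sq2 (i j : 'I_(p + q)) (f : 'I_(p + q) -> 'I_(p + q) -> Q) :
  \sum_r \sum_m (delta_mx i j + delta_mx j i : 'M[F]_(p + q)) r m *: f r m = f i j + f j i.
Proof.
rewrite -!sum_sq -big_split; apply: eq_bigr => r _; rewrite -big_split.
by apply: eq_bigr => m _; rewrite mxE scalerDl.
Qed.

Ltac rv := rewrite /Rv /Cv ?splitL ?splitR ?eq_shift.

Lemma Act_y e : Act (Tgen F e c0).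
Proof.
move=> l; rewrite /= sum_col; change (cls (Tgen F e c0)) with (@xg F p q e c0).
case: (ordLR l) => [[a ->]|[c ->]]; rv; nq.
  by rewrite A1 eq_sym.
by rewrite A2.
Qed.

Lemma Act_z f : Act (Tgen F r0 f).
Proof.
move=> l; rewrite /= sum_col; change (cls (Tgen F r0 f)) with (@xg F p q r0 f).
case: (ordLR l) => [[a ->]|[c ->]]; rv; nq.
  by rewrite A3 eq_sym.
by rewrite A4.
Qed.


Lemma Rep_y e : Rep (Tgen F e c0).
Proof.
rewrite /Rep /= sum_sq2; change (cls (Tgen F e c0)) with (@xg F p q e c0).
by rv; nq; rewrite -P2y.
Qed.

Lemma Rep_z f : f != c0 -> Rep (Tgen F r0 f).
Proof.
move=> hf; rewrite /Rep /= sum_sq2; change (cls (Tgen F r0 f)) with (@xg F p q r0 f).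
by rv; nq; rewrite -P2z.
Qed.

Definition tdec (a : 'I_p) (c : 'I_q) : term F p q :=
  Tadd (Tmul (Tmul (Tgen F a c0) (Tgen F r0 c0)) (Tgen F r0 c))
       (Tmul (Tmul (Tgen F r0 c) (Tgen F r0 c0)) (Tgen F a c0)).

Lemma cls_tdec a c : c != c0 -> cls (Tgen F a c) = cls (tdec a c).
Proof. by move=> hc; rewrite /tdec clsD !cls_mul; exact: Dec. Qed.

Lemma Act_gen a c : Act (Tgen F a c).
Proof.
case: (eqVneq c c0) => [->|hc]; first exact: Act_y.
case: (eqVneq a r0) => [->|ha]; first exact: Act_z.
have hA : Act (tdec a c) := Act_add (Act_mul (Act_mul (Act_y a) (Act_y r0)) (Act_z c))
   (Act_mul (Act_mul (Act_z c) (Act_y r0)) (Act_y a)).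
by move=> l; rewrite (cls_tdec a hc) -(@mmDec F p q a r0 c c0 hc); exact: hA.
Qed.

Lemma Rep_gen a c : Rep (Tgen F a c).
Proof.
case: (eqVneq c c0) => [->|hc]; first exact: Rep_y.
case: (eqVneq a r0) => [->|ha]; first exact: Rep_z.
have hA : Rep (tdec a c) := Rep_add (Rep_mul (Act_mul (Act_y a) (Act_y r0)) (Rep_z hc))
   (Rep_mul (Act_mul (Act_z c) (Act_y r0)) (Rep_y a)).
by rewrite /Rep (cls_tdec a hc) -(@mmDec F p q a r0 c c0 hc); exact: hA.
Qed.

Lemma Act_all t : Act t.
Proof.
elim: t => [a c| |t1 h1 t2 h2|t h|k t h|t1 h1 t2 h2].
- exact: Act_gen.
- exact: Act_zero.
- exact: Act_add.
- exact: Act_opp.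
- exact: Act_scale.
- exact: Act_mul.
Qed.

Lemma Rep_all t : Rep t.
Proof.
elim: t => [a c| |t1 h1 t2 h2|t h|k t h|t1 h1 t2 h2].
- exact: Rep_gen.
- exact: Rep_zero.
- exact: Rep_add.
- exact: Rep_opp.
- exact: Rep_scale.
- exact: Rep_mul (Act_all t1) h2.
Qed.

Lemma repM t (N : 'M[F]_(p + q)) : mm t = N ->
  cls t = \sum_r \sum_m N r m *: (Rv r ** Cv m).
Proof. by move=> <-; exact: Rep_all. Qed.

End Alg.


Theorem mainTheorem3 (F : fieldType) (p q : nat)
  (hF : [pchar F] =i pred0) (hp : (1 < p)%N) (hq : (1 < q)%N) (hpq : p != q)
  (j0 : 'I_q) (t0 : 'I_p) (hj0 : val j0 != 0%N) (ht0 : val t0 != 0%N) :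
  (forall (j1 : 'I_q) (t1 : 'I_p), val j1 != 0%N -> val t1 != 0%N ->
     forall i k : 'I_(p + q), ueq (@A F p q j0 t0 i k) (@A F p q j1 t1 i k)) /\
  (forall i k l t : 'I_(p + q),
     ueq (Tmul (@A F p q j0 t0 i k) (@A F p q j0 t0 l t)) (if k == l then @A F p q j0 t0 i t else Tzero)) /\
  (forall (i : 'I_p) (j : 'I_q),
     ueq (Tgen F i j) (Tadd (@A F p q j0 t0 (lshift q i) (rshift p j)) (@A F p q j0 t0 (rshift p j) (lshift q i)))).
Proof.
set r0 := ofirst t0; set c0 := ofirst j0.
have two : (2%:R : F) != 0.
  have := hF 2; rewrite !inE /= => /negbT. by [].
have hb : t0 != r0 by apply: contra ht0 => /eqP ->.
have hd : j0 != c0 by apply: contra hj0 => /eqP ->.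
have key j1 t1 : val j1 != 0%N -> val t1 != 0%N -> forall i k,
    cls (A F j1 t1 i k) = Rv F r0 c0 j0 i ** Cv F r0 c0 j0 k.
  by move=> h1 h2 i k; rewrite (repM two hb hd (mmA F h1 h2 i k)) sum_sq.
split; [|split].
- by move=> j1 t1 h1 h2 i k; apply/cls_eq; rewrite !key.
- move=> i k l t; apply/cls_eq.
  have hm : mm (Tmul (A F j0 t0 i k) (A F j0 t0 l t)) = delta_mx i t *+ (k == l).
    by rewrite /= !mmA // mul_delta_mx_cond.
  rewrite (repM two hb hd hm).
  case: eqP => _; first by rewrite mulr1n sum_sq key.
  rewrite cls0 big1 // => r _; rewrite big1 // => m _; by rewrite mulr0n mxE scale0r.
- move=> i j; apply/cls_eq; rewrite clsD !key //.
  by rewrite (repM two hb hd (erefl (mm (Tgen F i j)))) /= sum_sq2.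
Qed.
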